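(* Let $\mathcal X=\{1,\dots,n\}$, $N\ge 1$, and for $t=0,\dots,N-1$ let $M(t)=[m_{ij}(t)]_{i,j=1}^n$ be matrices with nonnegative entries such that the product $M(N-1)M(N-2)\cdots M(0)$ has all entries positive. Let $\nu_0,\nu_N$ be probability distributions on $\mathcal X$, and let $\varphi,\hat\varphi$ be nonnegative functions on $\{0,\dots,N\}\times\mathcal X$ solving the Schrödinger system $\varphi(t,i)=\sum_j m_{ij}(t)\varphi(t+1,j)$, $\hat\varphi(t+1,j)=\sum_i m_{ij}(t)\hat\varphi(t,i)$ ($0\le t\le N-1$), $\varphi(0,x)\hat\varphi(0,x)=\nu_0(x)$, $\varphi(N,x)\hat\varphi(N,x)=\nu_N(x)$, with $\varphi>0$, and let $\Pi(t)=\operatorname{diag}(\varphi(t))^{-1}M(t)\operatorname{diag}(\varphi(t+1))$ be the one-step transition matrices of the bridge $\mathfrak M^*[\nu_0,\nu_N]$. Then for any probability distributions $\rho_0,\rho_N$ on $\mathcal X$, the solution of the Schrödinger bridge problem with marginals $\rho_0,\rho_N$ and prior transition matrices $\Pi(t)$ coincides with the solution of the Schrödinger bridge problem with marginals $\rho_0,\rho_N$ and prior transition matrices $M(t)$; i.e. both have initial marginal $\rho_0$ and the same transition matrices $Q^*(t)=\operatorname{diag}(\psi_1(t))^{-1}M(t)\operatorname{diag}(\psi_1(t+1))$, where $(\psi_1,\hat\psi_1)$ solves the Schrödinger system for $M(t)$ with boundary data $\rho_0,\rho_N$.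
   Context: Schrödinger bridge problem (SBP): given nonnegative weights $m_{ij}(t)$ and a positive initial measure $\mu_0$ on $\mathcal X$, the prior is the (not necessarily probability) measure on paths $x=(x_0,\dots,x_N)\in\mathcal X^{N+1}$ given by $\mathfrak M(x)=\mu_0(x_0)m_{x_0x_1}(0)\cdots m_{x_{N-1}x_N}(N-1)$. For probability distributions $\nu_0,\nu_N$ on $\mathcal X$, the SBP asks for the minimizer $\mathfrak M^*[\nu_0,\nu_N]$ of the relative entropy $\mathbb D(P\|\mathfrak M)=\sum_x P(x)\log\frac{P(x)}{\mathfrak M(x)}$ (equal to $+\infty$ if the support of $P$ is not contained in that of $\mathfrak M$, with $0\log 0=0$) over probability distributions $P$ on paths with initial marginal $\nu_0$ and final marginal $\nu_N$. When the product $M(N-1)\cdots M(0)$ is entrywise positive, the solution is unique and is the Markov measure $\nu_0(x_0)\pi_{x_0x_1}(0)\cdots\pi_{x_{N-1}x_N}(N-1)$ with $\pi_{ij}(t)=m_{ij}(t)\varphi(t+1,j)/\varphi(t,i)$, $\varphi,\hat\varphi$ solving the Schrödinger system stated in the claim. The solution does not depend on the choice of positive initial measure $\mu_0$ of the prior. *)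

(* Defs.v *)
From HB Require Import structures.
From mathcomp Require Import all_boot all_order all_algebra.
From mathcomp Require Import reals ereal exp.
Set Implicit Arguments. Unset Strict Implicit. Unset Printing Implicit Defensive.
Import Order.TTheory GRing.Theory Num.Theory.
Local Open Scope ring_scope.

Section SB.
Variables (R : realType) (n N : nat).

Definition spath := {ffun 'I_N.+1 -> 'I_n}.

Definition tcur (t : 'I_N) : 'I_N.+1 := widen_ord (leqnSn N) t.
Definition tnext (t : 'I_N) : 'I_N.+1 := lift ord0 t.

(* ordered product M(N-1) * ... * M(0) *)
Definition mxprod (M : nat -> 'M[R]_n) : 'M[R]_n :=
  foldr (fun t A => A *m M t) 1%:M (iota 0 N).

Definition is_distr (nu : 'I_n -> R) : Prop :=
  (forall i, 0 <= nu i) /\ \sum_i nu i = 1.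

(* prior (possibly non-probability) measure on paths *)
Definition prior (mu0 : 'I_n -> R) (M : nat -> 'M[R]_n) (x : spath) : R :=
  mu0 (x ord0) * \prod_(t < N) M t (x (tcur t)) (x (tnext t)).

Definition markov (nu0 : 'I_n -> R) (Q : nat -> 'M[R]_n) (x : spath) : R :=
  nu0 (x ord0) * \prod_(t < N) Q t (x (tcur t)) (x (tnext t)).

Definition marginal (P : spath -> R) (s : 'I_N.+1) (i : 'I_n) : R :=
  \sum_(x : spath | x s == i) P x.

Definition relent (P Mm : spath -> R) : \bar R :=
  if [exists x : spath, (P x != 0) && (Mm x == 0)] then +oo%E
  else (\sum_(x : spath) (if P x == 0 then 0 else P x * ln (P x / Mm x)))%:E.

Definition admissible (nu0 nuN : 'I_n -> R) (P : spath -> R) : Prop :=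
  (forall x, 0 <= P x) /\ \sum_x P x = 1 /\
  (forall i, marginal P ord0 i = nu0 i) /\
  (forall i, marginal P ord_max i = nuN i).

Definition SBP_solution (Mm : spath -> R) (nu0 nuN : 'I_n -> R) (P : spath -> R) : Prop :=
  admissible nu0 nuN P /\
  forall Q, admissible nu0 nuN Q -> (relent P Mm <= relent Q Mm)%E.

Definition schroedinger_system (M : nat -> 'M[R]_n) (nu0 nuN : 'I_n -> R)
    (phi phihat : nat -> 'I_n -> R) : Prop :=
  (forall t, (t < N)%N -> forall i, phi t i = \sum_j M t i j * phi t.+1 j) /\
  (forall t, (t < N)%N -> forall j, phihat t.+1 j = \sum_i M t i j * phihat t i) /\
  (forall x, phi 0%N x * phihat 0%N x = nu0 x) /\
  (forall x, phi N x * phihat N x = nuN x).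

Definition htransform (M : nat -> 'M[R]_n) (phi : nat -> 'I_n -> R) : nat -> 'M[R]_n :=
  fun t => \matrix_(i, j) (M t i j * phi t.+1 j / phi t i).

End SB.

(* Main.v *)
Require Import Defs.
From HB Require Import structures.
From mathcomp Require Import all_boot all_order all_algebra.
From mathcomp Require Import reals ereal exp.
From mathcomp Require Import ring lra.
From Stdlib Require Import FunctionalExtensionality.
Import Order.TTheory GRing.Theory Num.Theory.
Local Open Scope ring_scope.


Section Paths.
Variable R : realType.
Variable n : nat.

Definition fcons {m} (a : 'I_n) (y : {ffun 'I_m -> 'I_n}) : {ffun 'I_m.+1 -> 'I_n} :=
  [ffun k => if unlift ord0 k is Some k' then y k' else a].

Lemma fcons0 m a y : @fcons m a y ord0 = a.
Proof. by rewrite /fcons ffunE unlift_none. Qed.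

Lemma fconsS m a y k : @fcons m a y (lift ord0 k) = y k.
Proof. by rewrite /fcons ffunE liftK. Qed.

Lemma big_fcons m (F : {ffun 'I_m.+1 -> 'I_n} -> R) :
  \sum_x F x = \sum_(a : 'I_n) \sum_(y : {ffun 'I_m -> 'I_n}) F (fcons a y).
Proof.
rewrite pair_big /=.
rewrite (reindex (fun p : 'I_n * {ffun 'I_m -> 'I_n} => fcons p.1 p.2)) //=.
exists (fun x : {ffun 'I_m.+1 -> 'I_n} => (x ord0, [ffun k => x (lift ord0 k)])) => [[a y] _|x _] /=.
  by rewrite fcons0; congr pair; apply/ffunP => k; rewrite ffunE fconsS.
apply/ffunP => k; rewrite /fcons ffunE.
case: unliftP => [j ->|->]; by rewrite ?ffunE.
Qed.

Lemma big_fcons_at m i (F : {ffun 'I_m.+1 -> 'I_n} -> R) :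
  \sum_(x : {ffun 'I_m.+1 -> 'I_n} | x ord0 == i) F x = \sum_(y : {ffun 'I_m -> 'I_n}) F (fcons i y).
Proof.
rewrite big_mkcond big_fcons (bigD1 i) //= [X in _ + X]big1 ?addr0.
  by apply: eq_bigr => y _; rewrite fcons0 eqxx.
move=> a ai; apply: big1 => y _; by rewrite fcons0 (negbTE ai).
Qed.

Lemma tcur_lift m (t : 'I_m) : tcur (lift ord0 t) = lift ord0 (tcur t).
Proof. exact: val_inj. Qed.
Lemma tnext_lift m (t : 'I_m) : tnext (lift ord0 t) = lift ord0 (tnext t).
Proof. exact: val_inj. Qed.
Lemma tcur0 m : tcur (ord0 : 'I_m.+1) = ord0.
Proof. exact: val_inj. Qed.
Lemma tnext0 m : tnext (ord0 : 'I_m.+1) = lift ord0 ord0.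
Proof. exact: val_inj. Qed.
Lemma ordmax_lift m : (ord_max : 'I_m.+2) = lift ord0 ord_max.
Proof. exact: val_inj. Qed.

Lemma path_back m (A : nat -> 'M[R]_n) (h : nat -> 'I_n -> R) :
  (forall t, (t < m)%N -> forall i, h t i = \sum_j A t i j * h t.+1 j) ->
  forall i, \sum_(x : {ffun 'I_m.+1 -> 'I_n} | x ord0 == i)
     (\prod_(t < m) A t (x (tcur t)) (x (tnext t))) * h m (x ord_max) = h 0%N i.
Proof.
elim: m A h => [|m IH] A h Hh i.
  rewrite big_fcons_at.
  have -> : (ord_max : 'I_1) = ord0 by apply: val_inj.
  under eq_bigr => y _ do rewrite big_ord0 mul1r fcons0.
  by rewrite sumr_const card_ffun !card_ord expn0.
rewrite big_fcons_at.
under eq_bigr => y _ do rewrite big_ord_recl ordmax_lift fconsS.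
have -> : tcur (ord0 : 'I_m.+1) = ord0 by apply: val_inj.
have -> : tnext (ord0 : 'I_m.+1) = lift ord0 ord0 by apply: val_inj.
under eq_bigr => y _ do (under eq_bigr => t _ do rewrite tcur_lift tnext_lift !fconsS; rewrite fcons0 fconsS).
rewrite (partition_big (fun y : {ffun 'I_m.+1 -> 'I_n} => y ord0) predT) //=.
rewrite Hh //.
apply: eq_bigr => j _.
under eq_bigr => y /eqP -> do rewrite -mulrA.
rewrite -big_distrr /=; congr (_ * _).

rewrite (IH (fun t => A t.+1) (fun t => h t.+1)) //.
by move=> t tm k; apply: Hh.
Qed.


Lemma path_forw m (A : nat -> 'M[R]_n) (h : nat -> 'I_n -> R) :
  (forall t, (t < m)%N -> forall j, h t.+1 j = \sum_i A t i j * h t i) ->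
  forall j, \sum_(x : {ffun 'I_m.+1 -> 'I_n} | x ord_max == j)
     h 0%N (x ord0) * (\prod_(t < m) A t (x (tcur t)) (x (tnext t))) = h m j.
Proof.
elim: m A h => [|m IH] A h Hh j.
  have -> : (ord_max : 'I_1) = ord0 by apply: val_inj.
  rewrite big_fcons_at.
  under eq_bigr => y _ do rewrite big_ord0 mulr1 fcons0.
  by rewrite sumr_const card_ffun !card_ord expn0.
rewrite big_mkcond big_fcons.
under eq_bigr => a _ do (under eq_bigr => y _ do (rewrite ordmax_lift fconsS big_ord_recl tcur0 tnext0 fcons0 fconsS; under eq_bigr => t _ do rewrite tcur_lift tnext_lift !fconsS)).
rewrite exchange_big /=.
rewrite -(IH (fun t => A t.+1) (fun t => h t.+1)); last by move=> t tm k; apply: Hh.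
rewrite [RHS]big_mkcond; apply: eq_bigr => y _.
case: eqP => _; last by rewrite big1.
rewrite Hh // big_distrl; apply: eq_bigr => a _ /=.
by rewrite mulrA [h 0%N a * _]mulrC.
Qed.

End Paths.


Section Aux.
Variable R : realType.

Lemma ln_le_sub1 (y : R) : 0 < y -> ln y <= y - 1.
Proof.
move=> y0; have := @le_ln1Dx R (y - 1).
have -> : 1 + (y - 1) = y by ring.
apply; lra.
Qed.

Lemma ln_lt_sub1 (y : R) : 0 < y -> y != 1 -> ln y < y - 1.
Proof.
move=> y0 y1; have z0 : ln y != 0 by rewrite ln_eq0.
have := expR_gt1Dx z0; rewrite lnK ?posrE //; lra.
Qed.

Lemma lnMp (a b : R) : 0 < a -> 0 < b -> ln (a * b) = ln a + ln b.
Proof. by move=> a0 b0; apply: lnM; rewrite posrE. Qed.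

Lemma lnDp (a b : R) : 0 < a -> 0 < b -> ln (a / b) = ln a - ln b.
Proof. by move=> a0 b0; apply: ln_div; rewrite posrE. Qed.

Lemma term_split (p m w : R) : 0 < p -> 0 < m -> 0 < w ->
  p * ln (p / m) = p * ln (p / (m * w)) + p * ln w.
Proof.
move=> p0 m0 w0.
rewrite !lnDp ?mulr_gt0 // lnMp //; ring.
Qed.

Lemma gibbs (T : finType) (P Q : T -> R) :
  (forall x, 0 <= P x) -> (forall x, 0 <= Q x) ->
  \sum_x P x = 1 -> \sum_x Q x = 1 -> (forall x, P x != 0 -> Q x != 0) ->
  0 <= \sum_x (if P x == 0 then 0 else P x * ln (P x / Q x)) /\
  (\sum_x (if P x == 0 then 0 else P x * ln (P x / Q x)) = 0 -> forall x, P x = Q x).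
Proof.
move=> P0 Q0 sP sQ PQ.
set d := fun x => (if P x == 0 then 0 else P x * ln (P x / Q x)) - (P x - Q x).
have dge0 : forall x, 0 <= d x.
  move=> x; rewrite /d; case: eqP => [->|Px]; first by rewrite !sub0r opprK.
  have p0 : 0 < P x by rewrite lt_def P0 andbT; apply/eqP.
  have q0 : 0 < Q x by rewrite lt_def Q0 andbT PQ //; apply/eqP.
  have := ln_le_sub1 _ (divr_gt0 q0 p0); rewrite !lnDp //.
  move=> h; have h2 := ler_wpM2l (ltW p0) h.
  have e : P x * (Q x / P x - 1) = Q x - P x by field; apply/lt0r_neq0.
  rewrite e in h2; lra.
have sd : \sum_x d x = \sum_x (if P x == 0 then 0 else P x * ln (P x / Q x)).
  rewrite /d sumrB sumrB sP sQ subrr subr0 //.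
split; first by rewrite -sd; apply: sumr_ge0.
move=> S0 x; rewrite -sd in S0.
have dx := psumr_eq0P (fun i _ => dge0 i) S0 (i:=x) isT.
move: dx; rewrite /d; case: eqP => [->|Px]; first by move/eqP; rewrite sub0r sub0r opprK eq_sym => /eqP.
have p0 : 0 < P x by rewrite lt_def P0 andbT; apply/eqP.
have q0 : 0 < Q x by rewrite lt_def Q0 andbT PQ //; apply/eqP.
move=> h.
have [/eqP e|ne] := boolP (Q x / P x == 1).
  by move: e => /(congr1 (fun z => z * P x)); rewrite mulfVK ?mul1r; [move->|apply/lt0r_neq0].
have := ln_lt_sub1 _ (divr_gt0 q0 p0) ne; rewrite !lnDp // => h1.
have h2 : P x * (ln (Q x) - ln (P x)) < P x * (Q x / P x - 1) by rewrite ltr_pM2l.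
have e : P x * (Q x / P x - 1) = Q x - P x by field; apply/lt0r_neq0.
rewrite e in h2; move: h; rewrite lnDp //; lra.
Qed.

End Aux.


Section Aux2.
Variable R : realType.
Variables n N : nat.
Implicit Types P Mm : spath n N -> R.

Lemma relent_split P Mm (Q w : spath n N -> R) :
  (forall x, 0 <= P x) -> (forall x, 0 <= Mm x) ->
  (forall x, Q x = Mm x * w x) ->
  (forall x, P x != 0 -> Mm x != 0 -> 0 < w x) ->
  ~~ [exists x, (P x != 0) && (Mm x == 0)] ->
  relent P Mm = ((\sum_x (if P x == 0 then 0 else P x * ln (P x / Q x)))
                 + \sum_x (if P x == 0 then 0 else P x * ln (w x)))%:E.
Proof.
move=> P0 M0 QE w0 nex; rewrite /relent (negbTE nex); congr EFin.
rewrite -big_split; apply: eq_bigr => x _ /=.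
case: eqP => Px; first by rewrite addr0.
move/existsPn: nex => /(_ x); rewrite negb_and negbK => /orP[/eqP//|Mx].
have p0 : 0 < P x by rewrite lt_def P0 andbT; apply/eqP.
have m0 : 0 < Mm x by rewrite lt_def M0 andbT.
by rewrite QE (@term_split R (P x) (Mm x) (w x)) // w0 //; apply/eqP.
Qed.

Lemma relent_shift P Mm Mm' (w : spath n N -> R) :
  (forall x, 0 <= P x) -> (forall x, 0 <= Mm x) -> (forall x, 0 < w x) ->
  (forall x, Mm' x = Mm x * w x) ->
  relent P Mm = (relent P Mm' + (\sum_x (if P x == 0 then 0 else P x * ln (w x)))%:E)%E.
Proof.
move=> P0 M0 w0 ME.
have eqex : [exists x, (P x != 0) && (Mm' x == 0)] = [exists x, (P x != 0) && (Mm x == 0)].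
  apply: eq_existsb => x; rewrite ME mulf_eq0 (gt_eqF (w0 x)) orbF //.
case: (boolP [exists x, (P x != 0) && (Mm x == 0)]) => ex.
  by rewrite /relent eqex ex.
rewrite (@relent_split P Mm Mm' w) // /relent eqex (negbTE ex) //.
Qed.

Lemma marg_sum P s (F : 'I_n -> R) :
  \sum_x P x * F (x s) = \sum_i marginal P s i * F i.
Proof.
rewrite (partition_big (fun x : spath n N => x s) predT) //=.
apply: eq_bigr => i _; rewrite /marginal big_distrl /=.
by apply: eq_bigr => x /eqP ->.
Qed.

Lemma marg_lin (rho0 rhoN : 'I_n -> R) P (f g : 'I_n -> R) :
  admissible rho0 rhoN P ->
  \sum_x P x * (f (x ord0) + g (x ord_max)) =
  \sum_i rho0 i * f i + \sum_j rhoN j * g j.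
Proof.
move=> [_ [_ [H0 HN]]].
under eq_bigr do rewrite mulrDr.
rewrite big_split /= (marg_sum P ord0 f) (marg_sum P ord_max g).
by congr (_ + _); apply: eq_bigr => i _; rewrite ?H0 ?HN.
Qed.

Lemma le_marg P s x : (forall y, 0 <= P y) -> P x <= marginal P s (x s).
Proof.
move=> P0; rewrite /marginal (bigD1 x) //= lerDl.
by apply: sumr_ge0 => y _; apply: P0.
Qed.

Lemma tele (x : spath n N) (A : nat -> 'M[R]_n) (u : nat -> 'I_n -> R) :
  (0 < N)%N -> (forall t i, (t <= N)%N -> 0 < u t i) ->
  \prod_(t < N) (A t (x (tcur t)) (x (tnext t)) * u t.+1 (x (tnext t)) / u t (x (tcur t))) =
  (\prod_(t < N) A t (x (tcur t)) (x (tnext t))) * (u N (x ord_max) / u 0%N (x ord0)).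
Proof.
move=> N0 u0.
under eq_bigr do rewrite -mulrA.
rewrite big_split /=; congr (_ * _).
pose v k := u k (x (inord k)).
have -> : u N (x ord_max) / u 0%N (x ord0) = v N / v 0%N.
  rewrite /v; congr (u _ (x _) / u _ (x _)); apply: val_inj; rewrite /= inordK //.
rewrite -(telescope_prodf (f := v)) //; last first.
  by move=> k /andP[_ kN]; rewrite /v gt_eqF // u0 // ltnW.
rewrite big_mkord; apply: eq_bigr => t _; rewrite /v.
have -> : tnext t = inord t.+1 by apply: val_inj; rewrite /= inordK // ltnS.
have -> : tcur t = inord t by apply: val_inj; rewrite /= inordK // ltnW // ltnS.
by [].
Qed.

End Aux2.


Theorem mainTheorem1 (R : realType) (n N : nat) (HN : (0 < N)%N)
  (M : nat -> 'M[R]_n)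
  (HMnn : forall t i j, (t < N)%N -> 0 <= M t i j)
  (HMpos : forall i j, 0 < mxprod N M i j)
  (nu0 nuN : 'I_n -> R) (Hnu0 : is_distr nu0) (HnuN : is_distr nuN)
  (phi phihat : nat -> 'I_n -> R)
  (Hphi : forall t i, (t <= N)%N -> 0 < phi t i)
  (Hphihat : forall t i, (t <= N)%N -> 0 <= phihat t i)
  (Hsys : schroedinger_system N M nu0 nuN phi phihat)
  (rho0 rhoN : 'I_n -> R) (Hrho0 : is_distr rho0) (HrhoN : is_distr rhoN)
  (mu0 : 'I_n -> R) (Hmu0 : forall i, 0 < mu0 i) :
  (forall P : spath n N -> R,
     SBP_solution (prior mu0 (htransform M phi)) rho0 rhoN P <->
     SBP_solution (prior mu0 M) rho0 rhoN P) /\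
  (forall psi psihat : nat -> 'I_n -> R,
     (forall t i, (t <= N)%N -> 0 < psi t i) ->
     (forall t i, (t <= N)%N -> 0 <= psihat t i) ->
     schroedinger_system N M rho0 rhoN psi psihat ->
     forall P : spath n N -> R,
       (SBP_solution (prior mu0 (htransform M phi)) rho0 rhoN P <->
          forall x, P x = markov rho0 (htransform M psi) x) /\
       (SBP_solution (prior mu0 M) rho0 rhoN P <->
          forall x, P x = markov rho0 (htransform M psi) x)).
Proof.
set prior0 := prior mu0 M.
set prior1 := prior mu0 (htransform M phi).
have pM0 : forall x : spath n N, 0 <= \prod_(t < N) M t (x (tcur t)) (x (tnext t)).
  by move=> x; apply: prodr_ge0 => t _; apply: HMnn.
have p0ge0 : forall x, 0 <= prior0 x.
  by move=> x; rewrite /prior0 /prior mulr_ge0 // ltW.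
have p1E : forall x, prior1 x = prior0 x * (phi N (x ord_max) / phi 0%N (x ord0)).
  move=> x; rewrite /prior1 /prior0 /prior -mulrA; congr (_ * _).
  rewrite -(@tele R n N x M phi) //.
  by apply: eq_bigr => t _; rewrite mxE.
have wpos : forall x : spath n N, 0 < phi N (x ord_max) / phi 0%N (x ord0).
  by move=> x; rewrite divr_gt0 // Hphi.
have shift : forall P, admissible rho0 rhoN P ->
    relent P prior0 = (relent P prior1 +
      (\sum_j rhoN j * ln (phi N j) + \sum_i rho0 i * (- ln (phi 0%N i)))%:E)%E.
  move=> P HP; rewrite (@relent_shift R n N P prior0 prior1 (fun x => phi N (x ord_max) / phi 0%N (x ord0))) //; last by case: HP.
  congr (_ + _%:E)%E; rewrite addrC -(@marg_lin R n N rho0 rhoN P (fun i => - ln (phi 0%N i)) (fun j => ln (phi N j)) HP).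
  apply: eq_bigr => x _; case: eqP => [->|_]; first by rewrite mul0r.
  by rewrite lnDp ?Hphi // [- _ + _]addrC.
have part1 : forall P, SBP_solution prior1 rho0 rhoN P <-> SBP_solution prior0 rho0 rhoN P.
  move=> P; split=> [[HP Hmin]|[HP Hmin]]; split=> // Q HQ.
    by rewrite !shift // leeD2rE // Hmin.
  by rewrite -(leeD2rE (x := ((\sum_j rhoN j * ln (phi N j) + \sum_i rho0 i * (- ln (phi 0%N i)))%:E))) // -!shift // Hmin.
split=> //.
move=> psi psihat Hpsi Hpsihat [Hb [Hf [H0 HNs]]].
set Qs := markov rho0 (htransform M psi).
set wq := fun x : spath n N => rho0 (x ord0) / (mu0 (x ord0) * psi 0%N (x ord0)) * psi N (x ord_max).
have QT : forall x, Qs x = rho0 (x ord0) * ((\prod_(t < N) M t (x (tcur t)) (x (tnext t))) * (psi N (x ord_max) / psi 0%N (x ord0))).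
  move=> x; rewrite /Qs /markov -(@tele R n N x M psi) //; congr (_ * _).
  by apply: eq_bigr => t _; rewrite mxE.
have QE : forall x, Qs x = prior0 x * wq x.
  move=> x; rewrite QT /prior0 /prior /wq.
  have m0 := Hmu0 (x ord0); have p0 := Hpsi 0%N (x ord0) isT.
  by field; rewrite ?mulf_neq0 ?gt_eqF.
have QE2 : forall x, Qs x = psihat 0%N (x ord0) * (\prod_(t < N) M t (x (tcur t)) (x (tnext t))) * psi N (x ord_max).
  move=> x; rewrite QT -H0.
  have p0 := Hpsi 0%N (x ord0) isT.
  by field; rewrite gt_eqF.
have Qge0 : forall x, 0 <= Qs x.
  by move=> x; rewrite QE2 !mulr_ge0 // ?Hpsihat // ltW // Hpsi.
have Qm0 : forall i, marginal Qs ord0 i = rho0 i.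
  move=> i; rewrite /marginal.
  under eq_bigr => x /eqP xi do rewrite QE2 xi -mulrA.
  by rewrite -big_distrr /= (@path_back R n N M psi Hb) -H0 mulrC.
have QmN : forall j, marginal Qs ord_max j = rhoN j.
  move=> j; rewrite /marginal.
  under eq_bigr => x /eqP xj do rewrite QE2 xj.
  by rewrite -big_distrl /= (@path_forw R n N M psihat Hf) -HNs mulrC.
have Qsum : \sum_x Qs x = 1.
  rewrite (partition_big (fun x : spath n N => x ord0) predT) //=.
  case: Hrho0 => _ <-; apply: eq_bigr => i _; exact: Qm0.
have Qadm : admissible rho0 rhoN Qs by [].
have rpos : forall P : spath n N -> R, admissible rho0 rhoN P -> forall x, P x != 0 -> 0 < rho0 (x ord0).
  move=> P [P0 [_ [HP0 _]]] x Px.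
  rewrite -HP0; apply: lt_le_trans (@le_marg R n N P ord0 x P0).
  by rewrite lt_def Px P0.
set C := \sum_i rho0 i * ln (rho0 i / (mu0 i * psi 0%N i)) + \sum_j rhoN j * ln (psi N j).
have Cw : forall P : spath n N -> R, admissible rho0 rhoN P -> \sum_x (if P x == 0 then 0 else P x * ln (wq x)) = C.
  move=> P HP; rewrite /C -(@marg_lin R n N rho0 rhoN P (fun i => ln (rho0 i / (mu0 i * psi 0%N i))) (fun j => ln (psi N j)) HP).
  apply: eq_bigr => x _; case: eqP => [->|/eqP Px]; first by rewrite mul0r.
  rewrite /wq lnMp // ?Hpsi // divr_gt0 ?mulr_gt0 ?Hpsi ?Hmu0 //.
  exact: rpos HP x Px.
pose D := fun P : spath n N -> R => \sum_x (if P x == 0 then 0 else P x * ln (P x / Qs x)).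
have decomp : forall P, admissible rho0 rhoN P -> ~~ [exists x, (P x != 0) && (prior0 x == 0)] ->
    relent P prior0 = (D P + C)%:E.
  move=> P HP ex; rewrite (@relent_split R n N P prior0 Qs wq) //.
  - by rewrite Cw.
  - by case: HP.
  - move=> x Px _; rewrite /wq mulr_gt0 ?Hpsi // divr_gt0 ?mulr_gt0 ?Hpsi ?Hmu0 //.
    exact: rpos HP x Px.
have Qfin : ~~ [exists x, (Qs x != 0) && (prior0 x == 0)].
  apply/existsPn => x; apply/negP => /andP[/eqP h /eqP e]; apply: h; by rewrite QE e mul0r.
have DQ0 : D Qs = 0.
  by apply: big1 => x _; case: eqP => // /eqP Qx; rewrite divff // ln1 mulr0.
have gib : forall P, admissible rho0 rhoN P -> ~~ [exists x, (P x != 0) && (prior0 x == 0)] ->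
    0 <= D P /\ (D P = 0 -> forall x, P x = Qs x).
  move=> P HP ex; case: (HP) => P0 [P1 _].
  apply: gibbs => // x Px; rewrite QE mulf_neq0 //.
    by move/existsPn: ex => /(_ x); rewrite Px /=.
  rewrite gt_eqF // /wq mulr_gt0 ?Hpsi // divr_gt0 ?mulr_gt0 ?Hpsi ?Hmu0 //.
  exact: rpos HP x Px.
have part2 : forall P, SBP_solution prior0 rho0 rhoN P <-> (forall x, P x = Qs x).
  move=> P; split.
    move=> [HP Hmin]; have := Hmin Qs Qadm.
    rewrite (decomp Qs Qadm Qfin) DQ0 add0r.
    case: (boolP [exists x, (P x != 0) && (prior0 x == 0)]) => ex.
      by rewrite /relent ex.
    rewrite decomp // lee_fin => h; have [g1 g2] := gib P HP ex.
    apply: g2; lra.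
  move=> PQ; have -> : P = Qs by apply: functional_extensionality.
  split=> // Q HQ; rewrite (decomp Qs Qadm Qfin) DQ0 add0r.
  case: (boolP [exists x, (Q x != 0) && (prior0 x == 0)]) => ex.
    by rewrite /relent ex leey.
  rewrite decomp // lee_fin; have [g1 _] := gib Q HQ ex; lra.
move=> P; split; last exact: part2.
split=> h; first by apply/part2/part1.
by apply/part1/part2.
Qed.
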